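(* Let $p$ be a prime, $w\ge1$, and $\mu>0$ a real number with $2^\mu$ an integer; let $c_\mu=\frac{2^\mu\sin(\pi/2^\mu)}{p\sin(\pi/p)}$. For any sets $A_1,\dots,A_{2^\mu}\subseteq\mathbb{F}_{p^w}$ with $\sum_{i=1}^{2^\mu}|A_i|=p^w$, \[ \sum_{i=1}^{2^\mu}\max_{\alpha\in\mathbb{F}_{p^w}\setminus\{0\}}\left|\widehat{\mathbb 1_{A_i}}(\alpha)\right|\le c_\mu . \]
   Context: For $A\subseteq\mathbb{F}_{p^w}$, $\mathbb 1_A$ is its characteristic function. $\mathrm{Tr}$ is the trace $\mathbb{F}_{p^w}\to\mathbb{F}_p$ (values in $\{0,\dots,p-1\}$), $\omega_p=e^{2\pi\mathbf i/p}$, and $\hat f(\alpha)=p^{-w}\sum_{x\in\mathbb{F}_{p^w}}f(x)\omega_p^{\mathrm{Tr}(\alpha x)}$. *)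

(* Defs.v *)
From HB Require Import structures.
From mathcomp Require Import all_boot all_order all_algebra all_field.
From mathcomp Require Import all_classical all_reals all_analysis.
From mathcomp Require Import complex.
Set Implicit Arguments. Unset Strict Implicit. Unset Printing Implicit Defensive.
Import Order.TTheory GRing.Theory Num.Theory.
Local Open Scope ring_scope.

(* Absolute trace F_{p^w} -> F_p, as an element of F: Tr x = sum_{i<w} x^(p^i). *)
Definition trF (F : finFieldType) (p w : nat) (x : F) : F :=
  \sum_(i < w) x ^+ (p ^ i).

(* The trace viewed as a value in {0,...,p-1}: the k < p with k%:R = Tr x. *)
Definition trnat (F : finFieldType) (p w : nat) (x : F) : nat :=
  oapp (@nat_of_ord p) 0%N [pick k : 'I_p | (k%:R : F) == trF p w x].

Definition omega (R : realType) (p : nat) : R[i] :=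
  (cos (2 * pi / p%:R) +i* sin (2 * pi / p%:R))%C.

Definition fhat (R : realType) (F : finFieldType) (p w : nat) (f : F -> R[i])
  (a : F) : R[i] :=
  ((p ^ w)%:R)^-1 * \sum_(x : F) f x * omega R p ^+ trnat p w (a * x).

Definition charf (R : realType) (F : finFieldType) (A : {set F}) : F -> R[i] :=
  fun x => (x \in A)%:R.

(* Main.v *)
Require Import Defs.
From HB Require Import structures.
From mathcomp Require Import all_boot all_order all_algebra all_field.
From mathcomp Require Import all_classical all_reals all_analysis.
From mathcomp Require Import complex.
From mathcomp Require Import ring lra.
Import Order.TTheory GRing.Theory Num.Theory.
Import numFieldNormedType.Exports.
Set Implicit Arguments. Unset Strict Implicit. Unset Printing Implicit Defensive.
Local Open Scope ring_scope.

Section Trig.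
Variable R : realType.
Implicit Types x y a c u v : R.

Lemma sin_mvt x y : x < y ->
  exists2 c, c \in `]x, y[ & sin y - sin x = cos c * (y - x).
Proof.
move=> xy; apply: (MVT xy) => //.
exact/continuous_subspaceT/continuous_sin.
Qed.

Lemma cos_le_pi x y : 0 <= x -> x <= y -> y <= pi -> cos y <= cos x.
Proof.
move=> x0 xy ypi; have [->|nxy] := eqVneq x y; first by [].
apply/ltW; rewrite ltr_cos ?in_itv /= ?x0 ?(le_trans x0 xy) ?ypi ?(le_trans xy ypi) //.
by rewrite lt_neqAle nxy xy.
Qed.

Lemma sin_up u v l : u <= v -> (forall c, u <= c -> c <= v -> l <= cos c) ->
  l * (v - u) <= sin v - sin u.
Proof.
move=> uv H; have [->|nuv] := eqVneq u v; first by rewrite !subrr mulr0.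
have uv' : u < v by rewrite lt_neqAle nuv uv.
have [c] := sin_mvt uv'; rewrite in_itv /= => /andP[uc cv] ->.
by rewrite ler_wpM2r ?subr_ge0 // H // ltW.
Qed.

Lemma sin_down u v l : u <= v -> (forall c, u <= c -> c <= v -> cos c <= l) ->
  sin v - sin u <= l * (v - u).
Proof.
move=> uv H; have [->|nuv] := eqVneq u v; first by rewrite !subrr mulr0.
have uv' : u < v by rewrite lt_neqAle nuv uv.
have [c] := sin_mvt uv'; rewrite in_itv /= => /andP[uc cv] ->.
by rewrite ler_wpM2r ?subr_ge0 // H // ltW.
Qed.

Lemma cos_ge_sym a c : a <= pi -> `|c| <= a -> cos a <= cos c.
Proof.
by move=> api ca; rewrite -(cos_norm c); apply: cos_le_pi.
Qed.

Lemma cosB2pi c : cos (c - pi *+ 2) = cos c.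
Proof. by rewrite -cosD2pi subrK. Qed.

Lemma cos_le_mid a c : 0 <= a -> a <= c -> c <= pi *+ 2 - a -> cos c <= cos a.
Proof.
move=> a0 ac cb; have [cpi|pic] := leP c pi; first exact: cos_le_pi.
have -> : cos c = cos (pi *+ 2 - c) by rewrite addrC cosD2pi cosN.
apply: cos_le_pi => //; first by lra.
by rewrite mulr2n; lra.
Qed.

Lemma sin_tangent x0 y : 0 <= x0 -> x0 <= pi -> 0 <= y -> y <= pi ->
  sin y <= sin x0 + cos x0 * (y - x0).
Proof.
move=> x00 x0pi y0 ypi; have [xy|yx] := leP x0 y.
  have := @sin_down x0 y (cos x0) xy.
  have H : forall c, x0 <= c -> c <= y -> cos c <= cos x0.
    by move=> c xc cy; apply: cos_le_pi => //; lra.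
  move/(_ H); lra.
have := @sin_up y x0 (cos x0) (ltW yx).
have H : forall c, y <= c -> c <= x0 -> cos x0 <= cos c.
  by move=> c xc cy; apply: cos_le_pi => //; lra.
move/(_ H); lra.
Qed.

End Trig.

Section Phi.
Variable R : realType.
Variable a : R.
Hypothesis a0 : 0 <= a.
Hypothesis api : a <= pi.
Implicit Types x y c u v : R.

Let l := cos a.
Definition gg x := sin x - l * x.
Let C := gg a - gg (- a).
Definition Phi x := if x <= - a then 0 else if x <= a then gg x - gg (- a)
  else if x <= pi *+ 2 - a then C else C + gg x - gg (pi *+ 2 - a).

Lemma pi0 : 0 < pi :> R. Proof. exact: pi_gt0. Qed.
Lemma pi2 : pi *+ 2 = pi + pi :> R. Proof. by rewrite mulr2n. Qed.

Local Ltac hyps := have ? := a0; have ? := api; have ? := pi_gt0 R.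

Lemma Phi1 x : x <= - a -> Phi x = 0.
Proof. by rewrite /Phi => ->. Qed.

Lemma Phi2 x : - a <= x -> x <= a -> Phi x = gg x - gg (- a).
Proof.
move=> h1 h2; rewrite /Phi h2; case: ifP => // h3.
have -> : x = - a by (hyps; lra).
by rewrite subrr.
Qed.

Lemma Phi3 x : a <= x -> x <= pi *+ 2 - a -> Phi x = C.
Proof.
move=> h1 h2; rewrite /Phi h2; case: ifP => h3.
  have ea : a = 0 by hyps; lra.
  by rewrite /C ea oppr0 subrr.
case: ifP => // h4; have -> : x = a by (hyps; lra).
by [].
Qed.

Lemma Phi4 x : pi *+ 2 - a <= x -> x <= pi *+ 2 + a -> Phi x = C + gg x - gg (pi *+ 2 - a).
Proof.
move=> h1 h2; rewrite /Phi; case: ifP => h3; first by (hyps; lra).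
case: ifP => h4.
  have ea : a = pi by (hyps; lra).
  have ex : x = pi by (hyps; lra).
  have e : pi *+ 2 - pi = pi :> R by rewrite pi2 addrK.
  by rewrite /C ex ea e addrK.
case: ifP => h5; last by [].
have -> : x = pi *+ 2 - a by (hyps; lra).
by rewrite addrK.
Qed.

Definition PP u v := Phi u <= Phi v /\ Phi u - gg u <= Phi v - gg v.

Lemma PP_trans x y z : PP x y -> PP y z -> PP x z.
Proof. by move=> [h1 h2] [h3 h4]; split; [apply: le_trans h3|apply: le_trans h4]. Qed.

Lemma glue e0 e1 e2 :
  (forall u v, e0 <= u -> u <= v -> v <= e1 -> PP u v) ->
  (forall u v, e1 <= u -> u <= v -> v <= e2 -> PP u v) ->
  forall u v, e0 <= u -> u <= v -> v <= e2 -> PP u v.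
Proof.
move=> H1 H2 u v h0 uv h2; have [ve1|e1v] := leP v e1; first exact: H1.
have [e1u|ue1] := leP e1 u; first exact: H2.
apply: (@PP_trans _ e1); [apply: H1|apply: H2] => //; exact: ltW.
Qed.

Lemma gg_up u v : (forall c, u <= c -> c <= v -> l <= cos c) -> u <= v -> gg u <= gg v.
Proof.
move=> H uv; have := sin_up uv H; rewrite /gg; (hyps; lra).
Qed.

Lemma gg_down u v : (forall c, u <= c -> c <= v -> cos c <= l) -> u <= v -> gg v <= gg u.
Proof.
move=> H uv; have := sin_down uv H; rewrite /gg; (hyps; lra).
Qed.

Lemma PP_all u v : a - pi *+ 2 <= u -> u <= v -> v <= a + pi *+ 2 -> PP u v.
Proof.
apply: (@glue _ (- a)).
  move=> x y h1 h2 h3; rewrite /PP !Phi1 //; last by (hyps; lra).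
  split => //; rewrite !sub0r lerN2; apply: gg_down => // c c1 c2.
  rewrite -cosD2pi; apply: cos_le_mid => //; (hyps; lra).
apply: (@glue _ a).
  move=> x y h1 h2 h3; rewrite /PP !Phi2 //; try (hyps; lra).
  have : gg x <= gg y.
    apply: gg_up => // c c1 c2; apply: cos_ge_sym => //.
    by rewrite ler_norml; apply/andP; split; (hyps; lra).
  by move=> h; split; (hyps; lra).
apply: (@glue _ (pi *+ 2 - a)).
  move=> x y h1 h2 h3; rewrite /PP !Phi3 //; try (hyps; lra).
  split => //; rewrite lerD2l lerN2; apply: gg_down => // c c1 c2.
  apply: cos_le_mid => //; (hyps; lra).
move=> x y h1 h2 h3; rewrite /PP !Phi4 //; try (hyps; lra).
have : gg x <= gg y.
  apply: gg_up => // c c1 c2; rewrite -cosB2pi; apply: cos_ge_sym => //.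
  by rewrite ler_norml; apply/andP; split; (hyps; lra).
by move=> h; split; (hyps; lra).
Qed.

Lemma Phi_window x0 : a - pi *+ 2 <= x0 -> x0 <= a ->
  Phi (x0 + pi *+ 2) - Phi x0 = sin a *+ 2 - (l * a) *+ 2.
Proof.
move=> h1 h2; have [xa|ax] := leP x0 (- a).
  rewrite (Phi1 xa) (@Phi3 (x0 + pi *+ 2)) ?subr0; try (hyps; lra).
  by rewrite /C /gg sinN mulrN !opprB mulr2n; (hyps; lra).
rewrite (@Phi2 x0) ?(@Phi4 (x0 + pi *+ 2)); try (hyps; lra).
rewrite /C /gg sinN mulrN.
have -> : sin (pi *+ 2 - a) = - sin a by rewrite addrC sinD2pi sinN.
have -> : sin (x0 + pi *+ 2) = sin x0 by rewrite sinD2pi.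
rewrite !mulrDr !mulrN mulr2n; (hyps; lra).
Qed.

Lemma core (p : nat) (x0 : R) (t : nat -> R) : (0 < p)%N ->
  a - pi *+ 2 <= x0 -> x0 <= a ->
  (forall j, (j < p)%N -> 0 <= t j <= 1) ->
  a = pi / p%:R * \sum_(0 <= j < p) t j ->
  \sum_(0 <= j < p) t j * (sin (x0 + j.+1%:R * (pi *+ 2 / p%:R))
                          - sin (x0 + j%:R * (pi *+ 2 / p%:R))) <= sin a *+ 2.
Proof.
move=> p0 h1 h2 ht Ha.
set h := pi *+ 2 / p%:R.
have pR : 0 < p%:R :> R by rewrite ltr0n.
have hp : p%:R * h = pi *+ 2 by rewrite /h mulrC divfK // gt_eqF.
have h0 : 0 <= h by rewrite /h divr_ge0 // ?ler0n // mulrn_wge0 // pi_ge0.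
pose x (j : nat) := x0 + j%:R * h.
have xr : forall j, (j <= p)%N -> a - pi *+ 2 <= x j /\ x j <= a + pi *+ 2.
  move=> j jp; have jh0 : 0 <= j%:R * h by rewrite mulr_ge0 // ler0n.
  have jh : j%:R * h <= pi *+ 2 by rewrite -hp ler_wpM2r // ler_nat.
  rewrite /x; split; (hyps; lra).
have step : forall j, (j < p)%N -> t j * (sin (x j.+1) - sin (x j))
    <= t j * (l * h) + (Phi (x j.+1) - Phi (x j)).
  move=> j jp; have [xa xb] := xr j (ltnW jp); have [ya yb] := xr j.+1 jp.
  have xy : x j.+1 - x j = h by rewrite /x -addn1 natrD mulrDl mul1r; ring.
  have xle : x j <= x j.+1 by (hyps; lra).
  have [P1 P2] := PP_all xa xle yb.
  move: P2; rewrite /gg => P2.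
  have [t0 t1] : 0 <= t j /\ t j <= 1 by move: (ht j jp) => /andP.
  have lh : l * h = l * x j.+1 - l * x j by rewrite -mulrBr xy.
  have key : sin (x j.+1) - sin (x j) - l * h <= Phi (x j.+1) - Phi (x j).
    by rewrite lh; lra.
  have D0 : 0 <= Phi (x j.+1) - Phi (x j) by rewrite subr_ge0.
  move: key D0; set D := Phi _ - Phi _; set s := sin _ - sin _; set L := l * h.
  move=> key D0; nra.
have -> : \sum_(0 <= j < p) t j * (sin (x0 + j.+1%:R * h) - sin (x0 + j%:R * h))
   = \sum_(0 <= j < p) t j * (sin (x j.+1) - sin (x j)) by [].
have step' : forall j, (0 <= j < p)%N -> t j * (sin (x j.+1) - sin (x j))
    <= t j * (l * h) + (Phi (x j.+1) - Phi (x j)).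
  by move=> j /andP[_ jp]; exact: step.
apply: (le_trans (ler_sum_nat step')).
rewrite big_split /= -mulr_suml telescope_sumr //.
have -> : x p = x0 + pi *+ 2 by rewrite /x hp.
have -> : x 0%N = x0 by rewrite /x mul0r addr0.
rewrite Phi_window //.
have -> : (\sum_(0 <= i < p) t i) * (l * h) = (l * a) *+ 2.
  by rewrite Ha /h; field; rewrite gt_eqF.
(hyps; lra).
Qed.

End Phi.

Section Cplx.
Variable R : realType.
Local Open Scope complex_scope.

Lemma sum_complex (I : finType) (f g : I -> R) :
  \sum_(i : I) (f i +i* g i) = (\sum_i f i) +i* (\sum_i g i).
Proof.
elim/big_rec3: _ => //= i x y z _ ->.
by [].
Qed.

Lemma omegaX (p j : nat) : omega R p ^+ j =
  cos (j%:R * (2 * pi / p%:R)) +i* sin (j%:R * (2 * pi / p%:R)).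
Proof.
elim: j => [|j IH]; first by rewrite expr0 mul0r cos0 sin0.
rewrite exprSr IH /omega; set th := 2 * pi / p%:R.
rewrite -[j.+1]addn1 natrD mulrDl mul1r cosD sinD /=.
by congr (_ +i* _); ring.
Qed.

Lemma angle_exists (al be : R) : al ^+ 2 + be ^+ 2 = 1 ->
  exists phi, [/\ - pi <= phi, phi <= pi, cos phi = al & sin phi = be].
Proof.
move=> h.
have ha : -1 <= al <= 1 by apply/andP; split; nra.
have c1 : cos (acos al) = al by rewrite acosK // in_itv /=.
have s1 : sin (acos al) = `|be|.
  by rewrite sin_acos // -h addrAC subrr add0r sqrtr_sqr.
have g0 := acos_ge0 ha; have gp := acos_lepi ha.
have [b0|b0] := leP 0 be.
  exists (acos al); split => //; first by have := pi_gt0 R; lra.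
  by rewrite s1 ger0_norm.
exists (- acos al); split => //; first by lra.
  by have := pi_gt0 R; lra.
  by rewrite cosN.
by rewrite sinN s1 ltr0_norm // opprK.
Qed.

Lemma core2 (a : R) (a0 : 0 <= a) (api : a <= pi) (p : nat) (x0 : R) (t : nat -> R) :
  (0 < p)%N ->
  a - pi *+ 4 <= x0 -> x0 <= a + pi *+ 2 ->
  (forall j, (j < p)%N -> 0 <= t j <= 1) ->
  a = pi / p%:R * \sum_(0 <= j < p) t j ->
  \sum_(0 <= j < p) t j * (sin (x0 + j.+1%:R * (pi *+ 2 / p%:R))
                          - sin (x0 + j%:R * (pi *+ 2 / p%:R))) <= sin a *+ 2.
Proof.
move=> p0 h1 h2 ht Ha.
have shift : forall y k : R, sin (y - pi *+ 2 + k) = sin (y + k).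
  by move=> y k; rewrite -(sinD2pi (y - pi *+ 2 + k)); congr sin; rewrite mulr2n; ring.
have shift' : forall y k : R, sin (y + pi *+ 2 + k) = sin (y + k).
  by move=> y k; rewrite -addrA (addrC (pi *+ 2)) addrA sinD2pi.
have [xa|ax] := leP x0 a.
  have [ax2|xa2] := leP (a - pi *+ 2) x0; first exact: core.
  rewrite (eq_bigr (fun j => t j * (sin (x0 + pi *+ 2 + j.+1%:R * (pi *+ 2 / p%:R))
                          - sin (x0 + pi *+ 2 + j%:R * (pi *+ 2 / p%:R))))); last first.
    by move=> j _; rewrite !shift'.
  apply: (@core _ a a0 api p (x0 + pi *+ 2) t p0) => //; rewrite mulr2n; lra.
rewrite (eq_bigr (fun j => t j * (sin (x0 - pi *+ 2 + j.+1%:R * (pi *+ 2 / p%:R))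
                          - sin (x0 - pi *+ 2 + j%:R * (pi *+ 2 / p%:R))))); last first.
  by move=> j _; rewrite !shift.
apply: (@core _ a a0 api p (x0 - pi *+ 2) t p0) => //; rewrite mulr2n; lra.
Qed.

Lemma cplx_bound (p : nat) (t : nat -> R) : (1 < p)%N ->
  (forall j, (j < p)%N -> 0 <= t j <= 1) ->
  Normc.normc (\sum_(j < p) (t j)%:C * omega R p ^+ j) * sin (pi / p%:R)
   <= sin (pi / p%:R * \sum_(j < p) t j).
Proof.
move=> p1 ht; have p0 : (0 < p)%N by apply: ltnW.
have pR : 0 < p%:R :> R by rewrite ltr0n.
have pR1 : 1 < p%:R :> R by rewrite ltr1n.
have -> : \sum_(j < p) (t j)%:C * omega R p ^+ j =
   (\sum_(j < p) t j * cos (j%:R * (2 * pi / p%:R))) +i*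
   (\sum_(j < p) t j * sin (j%:R * (2 * pi / p%:R))).
  rewrite -sum_complex; apply: eq_bigr => j _; rewrite omegaX /=.
  rewrite -[(t j)%:C]/(t j +i* 0) -[(_ +i* _) * (_ +i* _)]/(_ +i* _).
  by congr (_ +i* _); ring.
rewrite /Normc.normc.
set X := \sum_(j < p) t j * cos _.
set Y := \sum_(j < p) t j * sin _.
set S := \sum_(j < p) t j.
have S0 : 0 <= S by apply: sumr_ge0 => j _; case/andP: (ht j (ltn_ord j)).
have Sp : S <= p%:R.
  apply: (@le_trans _ _ (\sum_(j < p) (1 : R))).
    by apply: ler_sum => j _; case/andP: (ht j (ltn_ord j)).
  by rewrite sumr_const card_ord.
set a := pi / p%:R * S.
have pip0 : 0 < pi / p%:R :> R by exact: divr_gt0 (pi_gt0 R) pR.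
have pipp : pi / p%:R < pi :> R by rewrite ltr_pdivrMr // ltr_pMr // pi_gt0.
have a0 : 0 <= a by rewrite mulr_ge0 // ltW.
have api : a <= pi.
  have h1 : S / p%:R <= 1 by rewrite ler_pdivrMr // mul1r.
  have -> : a = pi * (S / p%:R) by rewrite /a mulrAC -mulrA.
  by rewrite ler_piMr // pi_ge0.
have sp : 0 < sin (pi / p%:R) :> R by apply: sin_gt0_pi; rewrite pip0 pipp.
set r := Num.ExtraDef.sqrtr _.
have [r0|rn0] := eqVneq r 0.
  by rewrite r0 mul0r; apply: sin_ge0_pi; rewrite a0 api.
have rpos : 0 < r by rewrite lt_neqAle eq_sym rn0 sqrtr_ge0.
have rr : r ^+ 2 = X ^+ 2 + Y ^+ 2 by rewrite sqr_sqrtr // addr_ge0 // sqr_ge0.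
have hab : (X / r) ^+ 2 + (Y / r) ^+ 2 = 1.
  by rewrite !expr_div_n -mulrDl -rr divff // expf_neq0.
have [phi [phl phu cphi sphi]] := angle_exists hab.
have key : r = \sum_(j < p) t j * cos (j%:R * (2 * pi / p%:R) - phi).
  have e : X / r * X + Y / r * Y = (X ^+ 2 + Y ^+ 2) / r by field.
  have -> : r = X / r * X + Y / r * Y by rewrite e -rr expr2 mulfK.
  rewrite -cphi -sphi /X /Y !mulr_sumr -big_split; apply: eq_bigr => j _.
  by rewrite cosB /=; ring.
suff : (r * sin (pi / p%:R)) *+ 2 <= sin a *+ 2 by rewrite lerMn2r.
have E : (r * sin (pi / p%:R)) *+ 2 = \sum_(0 <= j < p)
   t j * (sin ((- phi - pi / p%:R) + j.+1%:R * (pi *+ 2 / p%:R))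
        - sin ((- phi - pi / p%:R) + j%:R * (pi *+ 2 / p%:R))).
  rewrite key mulr_suml -sumrMnl big_mkord; apply: eq_bigr => j _.
  set u := j%:R * (2 * pi / p%:R) - phi.
  have e1 : - phi - pi / p%:R + j.+1%:R * (pi *+ 2 / p%:R) = u + pi / p%:R.
    by rewrite /u -[j.+1]addn1 natrD; field; rewrite gt_eqF.
  have e2 : - phi - pi / p%:R + j%:R * (pi *+ 2 / p%:R) = u - pi / p%:R.
    by rewrite /u; field; rewrite gt_eqF.
  by rewrite e1 e2 (sinD u) (sinB u) mulr2n; ring.
rewrite E; apply: core2 => //.
- have h4 : pi *+ 4 = pi *+ 2 + pi *+ 2 :> R by rewrite -mulrnDr.
  by rewrite h4 mulr2n; lra.
- by rewrite mulr2n; lra.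
- by rewrite big_mkord /a /S.
Qed.

End Cplx.

Section FF.
Variables (F : finFieldType) (p w : nat).
Hypotheses (hp : prime p) (hw : (0 < w)%N) (hF : #|F| = (p ^ w)%N).

Lemma chF : p \in [pchar F]. Proof. exact: card_finPcharP hF hp. Qed.

Lemma frobX i (x y : F) : (x + y) ^+ (p ^ i) = x ^+ (p ^ i) + y ^+ (p ^ i).
Proof.
apply: exprDn_pchar; rewrite (eq_pnat _ (pcharf_eq chF)) pnatX pnat_id //.
Qed.

Lemma trF_add (x y : F) : trF p w (x + y) = trF p w x + trF p w y.
Proof. by rewrite /trF -big_split; apply: eq_bigr => i _; exact: frobX. Qed.

Lemma fixX (c : F) i : c ^+ p = c -> c ^+ (p ^ i) = c.
Proof.
move=> hc; elim: i => [|i IH]; first by rewrite expn0 expr1.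
by rewrite expnSr exprM IH hc.
Qed.

Lemma trF_scale (c x : F) : c ^+ p = c -> trF p w (c * x) = c * trF p w x.
Proof.
by move=> hc; rewrite /trF mulr_sumr; apply: eq_bigr => i _; rewrite exprMn (fixX _ hc).
Qed.

Lemma trF_fix (x : F) : (trF p w x) ^+ p = trF p w x.
Proof.
have e : forall y : F, y ^+ p = pFrobenius_aut chF y by [].
rewrite /trF e rmorph_sum /=.
pose f (i : nat) := x ^+ (p ^ i).
have -> : \sum_(i < w) pFrobenius_aut chF (x ^+ (p ^ i)) = \sum_(i < w) f i.+1.
  by apply: eq_bigr => i _; rewrite pFrobenius_autE -exprM -expnSr.
have -> : \sum_(i < w) x ^+ (p ^ i) = \sum_(i < w) f i by [].
have h : f 0%N + \sum_(i < w) f i.+1 = \sum_(i < w) f i + f w.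
  by rewrite -(big_ord_recl w (fun i : 'I_w.+1 => f i)) big_ord_recr.
have f0 : f 0%N = x by rewrite /f expn0 expr1.
have fw : f w = x by rewrite /f -hF expf_card.
by move: h; rewrite f0 fw addrC => /addIr.
Qed.

Lemma natr_inj k l : (k < p)%N -> (l < p)%N -> (k%:R : F) = l%:R -> k = l.
Proof.
wlog kl : k l / (k <= l)%N.
  move=> H kp lp e; have [/H|/ltnW/H] := leqP k l; first exact.
  by move=> H'; apply/esym/H' => //; apply/esym.
move=> kp lp e; apply/eqP; rewrite eqn_leq kl /=.
have : (l - k)%:R == 0 :> F by rewrite natrB // e subrr.
rewrite -(dvdn_pcharf chF) => /dvdn_leq.
case: (ltngtP k l) => // kl' /(_ _); rewrite subn_gt0 => /(_ kl') H.
have : (l - k < p)%N by apply: leq_ltn_trans (leq_subr _ _) lp.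
by rewrite ltnNge H.
Qed.

Lemma root_nat (y : F) : y ^+ p = y -> exists2 k, (k < p)%N & y = k%:R.
Proof.
move=> hy.
have p1 : (1 < p)%N := prime_gt1 hp.
case: (boolP (y \in [seq (k%:R : F) | k <- iota 0 p])).
  by case/mapP => k; rewrite mem_iota add0n => kp ->; exists k.
move=> ny; exfalso.
set P := ('X^p - 'X : {poly F}).
have sP : size P = p.+1.
  by rewrite /P size_polyDl size_polyXn // size_polyN size_polyX ltnS.
have rP : forall z : F, z ^+ p = z -> root P z.
  by move=> z hz; rewrite rootE /P hornerD hornerN hornerXn hornerX hz subrr.
have : P = 0.
  apply: (@roots_geq_poly_eq0 _ P (y :: [seq (k%:R : F) | k <- iota 0 p])).
  - rewrite /= rP //=; apply/allP => z /mapP [k _ ->]; apply: rP.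
    by rewrite -(pFrobenius_autE chF) pFrobenius_aut_nat.
  - rewrite /= ny /= map_inj_in_uniq ?iota_uniq //.
    move=> k l; rewrite !mem_iota !add0n => kp lp; exact: natr_inj.
  - by rewrite sP /= size_map size_iota.
by move=> P0; move: sP; rewrite P0 size_poly0.
Qed.

Lemma trnat_spec (x : F) : (trnat p w x < p)%N /\ (trnat p w x)%:R = trF p w x.
Proof.
have [k kp e] := root_nat (trF_fix x).
rewrite /trnat; case: pickP => [j /eqP hj | H] /=; first by split.
by move: (H (Ordinal kp)); rewrite /= e eqxx.
Qed.

Lemma trnat_eq (x : F) k : (k < p)%N -> (trnat p w x == k) = (trF p w x == k%:R).
Proof.
move=> kp; have [lt e] := trnat_spec x.
case: eqP => [<-|ne]; first by rewrite e eqxx.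
apply/esym/negbTE/eqP => h; apply: ne; apply: natr_inj => //; by rewrite e h.
Qed.

Lemma trF_nonzero : exists x : F, trF p w x != 0.
Proof.
have p1 : (1 < p)%N := prime_gt1 hp.
case: (boolP [exists x : F, trF p w x != 0]) => [/existsP [x hx]|]; first by exists x.
rewrite negb_exists => /forallP H; exfalso.
set T := \sum_(i < w) ('X^(p ^ i) : {poly F}).
have hT : forall x, T.[x] = trF p w x.
  by move=> x; rewrite /T horner_sum; apply: eq_bigr => i _; rewrite hornerXn.
have sT : (size T <= p ^ w)%N.
  apply: leq_trans (size_sum _ _ _) _; apply/bigmax_leqP => i _.
  rewrite size_polyXn; apply: leq_ltn_trans (_ : p ^ w.-1 < p ^ w)%N.
    by rewrite leq_exp2l // -ltnS prednK.
  by rewrite ltn_exp2l // prednK.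
have T0 : T = 0.
  apply: (@roots_geq_poly_eq0 _ T (enum F)).
  - by apply/allP => x _; rewrite rootE hT; move: (H x); rewrite negbK.
  - exact: enum_uniq.
  - by rewrite -cardE hF.
have wp : (w.-1 < w)%N by rewrite prednK.
have : T`_(p ^ w.-1) = 1.
  rewrite /T coef_sum (bigD1 (Ordinal wp)) //= coefXn eqxx big1 ?addr0 // => i ne.
  rewrite coefXn eqn_exp2l //; case: eqP => // e; move: ne; rewrite -val_eqE /= e eqxx.
  by [].
by rewrite T0 coef0 => /esym/eqP; rewrite oner_eq0.
Qed.

Lemma trF_onto k (a : F) : (k < p)%N -> a != 0 -> exists y, trF p w (a * y) = k%:R.
Proof.
move=> kp a0; have [x1 hx1] := trF_nonzero; set t := trF p w x1 in hx1.
have ht : t ^+ p = t by apply: trF_fix.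
set c := (k%:R : F) / t.
have hc : c ^+ p = c.
  rewrite /c exprMn exprVn ht -(pFrobenius_autE chF) pFrobenius_aut_nat //.
exists (a^-1 * (c * x1)); rewrite mulrA divff // mul1r trF_scale //.
by rewrite /c divfK.
Qed.

Definition fib (a : F) k := [set x : F | trnat p w (a * x) == k].

Lemma trF0 : trF p w (0 : F) = 0.
Proof. by apply/(addIr (trF p w 0)); rewrite -trF_add !addr0 add0r. Qed.

Lemma trF_N (x : F) : trF p w (- x) = - trF p w x.
Proof. by apply/(addIr (trF p w x)); rewrite -trF_add !addNr trF0. Qed.

Lemma fib_shift (a : F) k : (k < p)%N -> a != 0 -> #|fib a k| = #|fib a 0|.
Proof.
move=> kp a0; have [y hy] := trF_onto kp a0.
have p0 : (0 < p)%N := prime_gt0 hp.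
have -> : fib a k = [set x + y | x in fib a 0].
  apply/setP => z; rewrite inE; apply/idP/imsetP.
    move=> hz; exists (z - y); last by rewrite subrK.
    rewrite inE trnat_eq // mulrBr trF_add trF_N hy.
    by move: hz; rewrite trnat_eq // => /eqP ->; rewrite subrr.
  case=> x; rewrite inE trnat_eq // => /eqP hx ->.
  by rewrite trnat_eq // mulrDr trF_add hx hy add0r.
by rewrite card_imset //; apply: addIr.
Qed.

Lemma fib_card (a : F) k : (k < p)%N -> a != 0 -> #|fib a k| = (p ^ w.-1)%N.
Proof.
move=> kp a0; have p0 : (0 < p)%N := prime_gt0 hp.
pose tau (x : F) : 'I_p := Ordinal (proj1 (trnat_spec (a * x))).
have E : (#|F| = \sum_(j : 'I_p) #|fib a j|)%N.
  rewrite -sum1_card (partition_big tau xpredT) //=.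
  apply: eq_bigr => j _; rewrite -sum1_card; apply: eq_bigl => x.
  by rewrite inE /= -val_eqE.
have E2 : (\sum_(j : 'I_p) #|fib a j| = \sum_(j : 'I_p) #|fib a 0|)%N.
  by apply: eq_bigr => j _; apply: fib_shift.
rewrite (fib_shift kp a0); move: E; rewrite E2 sum_nat_const card_ord hF.
rewrite -(prednK hw) expnS => /eqP; rewrite eqn_pmul2l // => /eqP <-.
by [].
Qed.

Definition tau (a x : F) : 'I_p := Ordinal (proj1 (trnat_spec (a * x))).

Lemma tauE (a x : F) : (tau a x : nat) = trnat p w (a * x). Proof. by []. Qed.

Lemma hat_sum (R : realType) (A : {set F}) (a : F) :
  \sum_(x : F) charf R A x * omega R p ^+ trnat p w (a * x) =
  \sum_(j < p) (#|[set x in A | trnat p w (a * x) == j]|)%:R * omega R p ^+ j.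
Proof.
rewrite (partition_big (tau a) xpredT) //=; apply: eq_bigr => j _.
rewrite (bigID (fun x => x \in A)) /= [X in _ + X]big1 ?addr0; last first.
  by move=> x /andP[_ /negbTE xA]; rewrite /charf xA mul0r.
rewrite (eq_bigr (fun _ => omega R p ^+ j)); last first.
  by move=> x /andP[/eqP <- xA]; rewrite /charf xA mul1r.
rewrite sumr_const mulr_natl; congr (_ *+ _); apply: eq_card => x.
by rewrite !inE unfold_in /= -val_eqE /= andbC.
Qed.

Lemma card_split (A : {set F}) (a : F) :
  \big[addn/0%N]_(j < p) #|[set x in A | trnat p w (a * x) == j]| = #|A|.
Proof.
rewrite -sum1_card (partition_big (tau a) (fun _ => true)) //=.
apply: eq_bigr => j _; rewrite -sum1_card; apply: eq_bigl => x.
by rewrite !inE -val_eqE /=.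
Qed.

Local Open Scope complex_scope.
Lemma hat_bound (R : realType) (A : {set F}) (a : F) : a != 0 ->
  Normc.normc (fhat p w (@charf R F A) a) * (p%:R * sin (pi / p%:R))
   <= sin (pi * (#|A|%:R / (p ^ w)%:R)).
Proof.
move=> a0.
have p1 : (1 < p)%N := prime_gt1 hp.
have p0 : (0 < p)%N := prime_gt0 hp.
set N := (p ^ w.-1)%N.
have pw : (p ^ w = p * N)%N by rewrite /N -expnS prednK.
have N0 : (0 < N)%N by rewrite /N expn_gt0 p0.
have NR : 0 < N%:R :> R by rewrite ltr0n.
have pR : 0 < p%:R :> R by rewrite ltr0n.
set c := fun j : nat => #|[set x in A | trnat p w (a * x) == j]|.
set t := fun j : nat => (c j)%:R / N%:R : R.
have ht : forall j, (j < p)%N -> 0 <= t j <= 1.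
  move=> j jp; rewrite /t divr_ge0 ?ler0n //= ler_pdivrMr // mul1r ler_nat.
  rewrite /N /c -(fib_card jp a0); apply: subset_leq_card; apply/fintype.subsetP => x.
  by rewrite !inE => /andP[_ ->].
have St : \sum_(j < p) t j = #|A|%:R / N%:R.
  rewrite /t -mulr_suml -natr_sum; congr (_%:R / _).
  exact: card_split.
have hatE : fhat p w (@charf R F A) a =
    ((p%:R)^-1 : R)%:C * \sum_(j < p) (t j)%:C * omega R p ^+ j.
  rewrite /fhat hat_sum mulr_sumr mulr_sumr; apply: eq_bigr => j _.
  rewrite !mulrA; congr (_ * _).
  rewrite -!(rmorph_nat (real_complex R)) -fmorphV -!rmorphM /=.
  congr (_%:C); rewrite /t /c pw natrM; field.
  by rewrite !gt_eqF.
have cb := cplx_bound p1 ht.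
rewrite St in cb.
rewrite hatE Normc.normcM.
have -> : Normc.normc ((p%:R^-1 : R)%:C) = p%:R^-1.
  by rewrite -complexr0 /Normc.normc /= expr0n /= addr0 sqrtr_sqr ger0_norm // invr_ge0 ler0n.
set Z := Normc.normc _.
have -> : p%:R^-1 * Z * (p%:R * sin (pi / p%:R)) = Z * sin (pi / p%:R).
  by field; rewrite gt_eqF.
have -> : pi * (#|A|%:R / (p ^ w)%:R) = pi / p%:R * (#|A|%:R / N%:R) :> R.
  by rewrite pw natrM; field; rewrite !gt_eqF.
exact: cb.
Qed.

End FF.

Theorem lemma4p5 (R : realType) (p w : nat) (F : finFieldType)
  (hp : prime p) (hw : (1 <= w)%N) (hF : #|F| = (p ^ w)%N)
  (mu : R) (hmu : 0 < mu) (n : nat) (hn : (2 : R) `^ mu = n%:R)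
  (A : 'I_n -> {set F}) (hA : (\sum_(i < n) #|A i|)%N = (p ^ w)%N) :
  \sum_(i < n) \big[Num.max/0]_(a : F | a != 0)
       Normc.normc (fhat p w (@charf R F (A i)) a)
  <= (n%:R * sin (pi / n%:R)) / (p%:R * sin (pi / p%:R)).
Proof.
have n0 : (0 < n)%N.
  case: n A hA {hn} => // A; rewrite big_ord0 => /esym/eqP.
  by rewrite expn_eq0 => /andP[/eqP p0 _]; move: hp; rewrite p0.
have p1 : (1 < p)%N := prime_gt1 hp.
have pR : 0 < p%:R :> R by rewrite ltr0n ltnW.
have nR : 0 < n%:R :> R by rewrite ltr0n.
have pwR : 0 < (p ^ w)%:R :> R by rewrite ltr0n expn_gt0 ltnW.
have pip0 : 0 < pi / p%:R :> R by exact: divr_gt0 (pi_gt0 R) pR.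
have pipp : pi / p%:R < pi :> R.
  by rewrite ltr_pdivrMr // ltr_pMr ?ltr1n // pi_gt0.
have sp : 0 < sin (pi / p%:R) :> R by apply: sin_gt0_pi; rewrite pip0 pipp.
have D : 0 < p%:R * sin (pi / p%:R) :> R by rewrite mulr_gt0.
have dl : forall i, 0 <= pi * (#|A i|%:R / (p ^ w)%:R) :> R.
  by move=> i; apply: mulr_ge0; [exact: pi_ge0 | apply: divr_ge0; exact: ler0n].
have du : forall i, pi * (#|A i|%:R / (p ^ w)%:R) <= pi :> R.
  move=> i; rewrite ler_piMr ?pi_ge0 // ler_pdivrMr // mul1r ler_nat -hA.
  by rewrite (bigD1 i) //= leq_addr.
apply: (@le_trans _ _ (\sum_(i < n) sin (pi * (#|A i|%:R / (p ^ w)%:R)) / (p%:R * sin (pi / p%:R)))).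
  apply: ler_sum => i _.
  have hs : 0 <= sin (pi * (#|A i|%:R / (p ^ w)%:R)) :> R.
    by apply: sin_ge0_pi; rewrite dl du.
  apply: bigmax_le.
    by apply: divr_ge0 => //; exact: ltW.
  move=> a a0; rewrite ler_pdivlMr //; exact: hat_bound.
rewrite -mulr_suml ler_pM2r ?invr_gt0 //.
have x0l : 0 <= pi / n%:R :> R by apply: divr_ge0; [exact: pi_ge0 | exact: ler0n].
have x0u : pi / n%:R <= pi :> R.
  by rewrite ler_pdivrMr // ler_peMr ?pi_ge0 // ler1n.
apply: (@le_trans _ _ (\sum_(i < n) (sin (pi / n%:R) + cos (pi / n%:R) *
           (pi * (#|A i|%:R / (p ^ w)%:R) - pi / n%:R)))).
  by apply: ler_sum => i _; apply: sin_tangent.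
rewrite big_split /= sumr_const card_ord -mulr_sumr.
have -> : \sum_(i < n) (pi * (#|A i|%:R / (p ^ w)%:R) - pi / n%:R) = 0 :> R.
  rewrite sumrB sumr_const card_ord -mulr_sumr -mulr_suml -natr_sum hA divff ?gt_eqF //.
  by rewrite mulr1 -[_ *+ n]mulr_natr divfK ?gt_eqF // subrr.
by rewrite mulr0 addr0 mulr_natl.
Qed.
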